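(* Let $\Delta\subset\mathbf R^2$ be the triangle with vertices $(0,0),(1,0),(0,1)$ and let $U=\{(a,b,c)\in\mathbf R^3: a\mu_1+b\mu_2+c>0 \text{ for all }(\mu_1,\mu_2)\in\Delta\}$. Consider $$E(a,b,c)=8\pi^2\,\frac{\left(\int_{\partial\Delta}(a\mu_1+b\mu_2+c)^{-2}\,d\sigma\right)^2}{\int_\Delta(a\mu_1+b\mu_2+c)^{-4}\,d\mu}$$ on $U$, a function invariant under positive scaling, hence defined on $U/\mathbf R_+$. Then the only critical point of $E$ on $U/\mathbf R_+$ is $[(0,0,1)]$.
   Context: $d\mu$ is Lebesgue measure on $\Delta$ and $d\sigma$ is the boundary measure on $\partial\Delta$ induced in the standard way for Delzant polytopes (on each facet, the measure for which $d\mu$ equals $d\sigma$ times the derivative of the defining affine function with primitive integral normal). $E$ is the square of the normalized Einstein–Hilbert functional of the conformal metric $f^{-2}g$ on toric $\mathbf{CP}^2$ with $f=a\mu_1+b\mu_2+c$. *)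

(* Defs.v *)
From Stdlib Require Import Reals ClassicalEpsilon.
Open Scope R_scope.

(** Riemann integral of f over [a,b] as a total function: the (proof-independent)
    value RiemannInt pr when f is Riemann integrable, an arbitrary value otherwise. *)
Definition RInt (f : R -> R) (a b : R) : R :=
  epsilon (inhabits 0)
    (fun I => exists pr : Riemann_integrable f a b, RiemannInt pr = I).

Definition inDelta (m1 m2 : R) : Prop := 0 <= m1 /\ 0 <= m2 /\ m1 + m2 <= 1.

Definition inU (a b c : R) : Prop :=
  forall m1 m2, inDelta m1 m2 -> 0 < a * m1 + b * m2 + c.

Definition int_Delta (g : R -> R -> R) : R :=
  RInt (fun x => RInt (fun y => g x y) 0 (1 - x)) 0 1.

(** Integral over the boundary with the Delzant boundary measure d sigma:
    facet {m1 = 0}: d sigma = d m2;  facet {m2 = 0}: d sigma = d m1;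
    facet {m1 + m2 = 1} (affine function 1 - m1 - m2, primitive normal (-1,-1)):
    d sigma = d m1 in the parametrization m1 = t, m2 = 1 - t. *)
Definition int_bdry (g : R -> R -> R) : R :=
  RInt (fun t => g 0 t) 0 1 + RInt (fun t => g t 0) 0 1
  + RInt (fun t => g t (1 - t)) 0 1.

Definition faff (a b c m1 m2 : R) : R := a * m1 + b * m2 + c.

Definition E (a b c : R) : R :=
  8 * PI ^ 2 * (int_bdry (fun m1 m2 => / (faff a b c m1 m2) ^ 2)) ^ 2
  / int_Delta (fun m1 m2 => / (faff a b c m1 m2) ^ 4).

Definition critical_E (a b c : R) : Prop :=
  derivable_pt_lim (fun x => E x b c) a 0 /\
  derivable_pt_lim (fun y => E a y c) b 0 /\
  derivable_pt_lim (fun z => E a b z) c 0.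

(* Main.v *)
Require Import Defs.
From Stdlib Require Import Reals Lra Psatz ClassicalEpsilon.
From Coquelicot Require Import Coquelicot.
Open Scope R_scope.

Ltac nz := repeat (apply Rmult_integral_contrapositive_currified || apply pow_nonzero || apply Rinv_neq_0_compat); lra.

Lemma RInt_eq (f : R -> R) a b v : is_RInt f a b v -> Defs.RInt f a b = v.
Proof.
  intros H.
  assert (Hex : ex_RInt f a b) by (exists v; exact H).
  pose proof (ex_RInt_Reals_0 f a b Hex) as pr.
  unfold Defs.RInt.
  destruct (epsilon_spec (inhabits 0)
    (fun I => exists pr : Riemann_integrable f a b, RiemannInt pr = I))
    as [pr' Hpr'].
  { exists (RiemannInt pr); exists pr; reflexivity. }
  rewrite <- Hpr', <- RInt_Reals. apply is_RInt_unique; exact H.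
Qed.

Lemma int_inv2 (al be : R) : (forall t, 0 <= t <= 1 -> 0 < al + be * t) ->
  is_RInt (fun t => / (al + be * t) ^ 2) 0 1 (1 / (al * (al + be))).
Proof.
  intros Hp.
  assert (H0 := Hp 0 ltac:(lra)). assert (H1 := Hp 1 ltac:(lra)).
  replace (1 / (al * (al + be))) with
    (minus ((fun t => t / (al * (al + be * t))) 1) ((fun t => t / (al * (al + be * t))) 0)).
  2:{ unfold minus, plus, opp; simpl. field. split; lra. }
  apply (is_RInt_derive (fun t => t / (al * (al + be * t)))) .
  - intros x Hx. rewrite Rmin_left, Rmax_right in Hx by lra. specialize (Hp x Hx). assert (0 < al) by lra. auto_derive.
    + apply Rmult_integral_contrapositive_currified; lra.
    + field. lra.
  - intros y Hy. rewrite Rmin_left, Rmax_right in Hy by lra. specialize (Hp y Hy). apply (@ex_derive_continuous R_AbsRing R_NormedModule). auto_derive. nz.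
Qed.

Lemma int_inv4 (u be L : R) : 0 <= L -> (forall y, 0 <= y <= L -> 0 < u + be * y) ->
  is_RInt (fun y => / (u + be * y) ^ 4) 0 L
    (L * (u^2 + u * (u + be * L) + (u + be * L)^2) / (3 * u^3 * (u + be * L)^3)).
Proof.
  intros HL Hp.
  assert (H0 := Hp 0 ltac:(lra)). assert (H1 := Hp L ltac:(lra)).
  assert (0 < u) by lra.
  set (F := fun y => y * (u^2 + u * (u + be * y) + (u + be * y)^2) / (3 * u^3 * (u + be * y)^3)).
  replace (L * (u^2 + u * (u + be * L) + (u + be * L)^2) / (3 * u^3 * (u + be * L)^3))
    with (minus (F L) (F 0)).
  2:{ unfold minus, plus, opp, F; simpl. field. split; lra. }
  apply (is_RInt_derive F).
  - intros x Hx. rewrite Rmin_left, Rmax_right in Hx by lra. specialize (Hp x Hx).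
    unfold F. auto_derive.
    + nz.
    + field. lra.
  - intros y Hy. rewrite Rmin_left, Rmax_right in Hy by lra. specialize (Hp y Hy).
    apply (@ex_derive_continuous R_AbsRing R_NormedModule). auto_derive. nz.
Qed.

Lemma posD a b c : 0 < c -> 0 < a + c -> 0 < b + c -> inU a b c.
Proof.
  intros Hp Hq Hr m1 m2 [H1 [H2 H3]].
  replace (a * m1 + b * m2 + c) with (c * (1 - m1 - m2) + (a + c) * m1 + (b + c) * m2) by ring.
  assert (0 <= c * (1 - m1 - m2)) by (apply Rmult_le_pos; lra).
  assert (0 <= (a + c) * m1) by (apply Rmult_le_pos; lra).
  assert (0 <= (b + c) * m2) by (apply Rmult_le_pos; lra).
  destruct (Req_dec m1 0); destruct (Req_dec m2 0); subst.
  - lra.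
  - assert (0 < (b + c) * m2) by (apply Rmult_lt_0_compat; lra). lra.
  - assert (0 < (a + c) * m1) by (apply Rmult_lt_0_compat; lra). lra.
  - assert (0 < (b + c) * m2) by (apply Rmult_lt_0_compat; lra). lra.
Qed.

Definition Hout (a b c x : R) : R :=
  let r := b + c in let u := c + a * x in let v := r + (a - b) * x in
  let k := 1 - x in let m := c * k + u in let A := c + u in
  x * (A * (2 * c * u * (m + b * k) + b * (m + b * k)^2) - (1 + k) * c^2 * u^2)
    / (6 * c^2 * r^2 * u^2 * v^2).

Lemma bdry_val a b c : 0 < c -> 0 < a + c -> 0 < b + c ->
  int_bdry (fun m1 m2 => / (faff a b c m1 m2) ^ 2)
  = (c + (a + c) + (b + c)) / (c * (a + c) * (b + c)).
Proof.
  intros Hp Hq Hr. pose proof (posD a b c Hp Hq Hr) as HU.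
  unfold int_bdry.
  rewrite (RInt_eq _ 0 1 (1 / (c * (c + b)))).
  2:{ apply (is_RInt_ext (fun t => / (c + b * t) ^ 2)).
      - intros x _. unfold faff. f_equal. ring.
      - apply int_inv2. intros t Ht. unfold inU in HU.
        specialize (HU 0 t ltac:(unfold inDelta; lra)). lra. }
  rewrite (RInt_eq _ 0 1 (1 / (c * (c + a)))).
  2:{ apply (is_RInt_ext (fun t => / (c + a * t) ^ 2)).
      - intros x _. unfold faff. f_equal. ring.
      - apply int_inv2. intros t Ht. unfold inU in HU.
        specialize (HU t 0 ltac:(unfold inDelta; lra)). lra. }
  rewrite (RInt_eq _ 0 1 (1 / ((b + c) * ((b + c) + (a - b))))).
  2:{ apply (is_RInt_ext (fun t => / ((b + c) + (a - b) * t) ^ 2)).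
      - intros x _. unfold faff. f_equal. ring.
      - apply int_inv2. intros t Ht. unfold inU in HU.
        specialize (HU t (1 - t) ltac:(unfold inDelta; lra)). lra. }
  field. repeat split; lra.
Qed.

Lemma delta_val a b c : 0 < c -> 0 < a + c -> 0 < b + c ->
  int_Delta (fun m1 m2 => / (faff a b c m1 m2) ^ 4)
  = (c * (a + c) + (a + c) * (b + c) + (b + c) * c)
     / (6 * c^2 * (a + c)^2 * (b + c)^2).
Proof.
  intros Hp Hq Hr. pose proof (posD a b c Hp Hq Hr) as HU.
  unfold int_Delta.
  apply RInt_eq.
  apply (is_RInt_ext (fun x => (1 - x) * ((c + a * x)^2 + (c + a * x) * ((c + a * x) + b * (1 - x))
           + ((c + a * x) + b * (1 - x))^2) / (3 * (c + a * x)^3 * ((c + a * x) + b * (1 - x))^3))).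
  { intros x Hx. rewrite Rmin_left, Rmax_right in Hx by lra.
    symmetry. apply RInt_eq.
    apply (is_RInt_ext (fun y => / ((c + a * x) + b * y) ^ 4)).
    - intros y _. unfold faff. f_equal. ring.
    - apply int_inv4; [lra|]. intros y Hy.
      specialize (HU x y ltac:(unfold inDelta; lra)). lra. }
  replace ((c * (a + c) + (a + c) * (b + c) + (b + c) * c) / (6 * c^2 * (a + c)^2 * (b + c)^2))
    with (minus (Hout a b c 1) (Hout a b c 0)).
  2:{ unfold minus, plus, opp, Hout; simpl. field. repeat split; lra. }
  apply (is_RInt_derive (Hout a b c)).
  - intros x Hx. rewrite Rmin_left, Rmax_right in Hx by lra.
    assert (Hu := HU x 0 ltac:(unfold inDelta; lra)).
    assert (Hv := HU x (1 - x) ltac:(unfold inDelta; lra)).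
    unfold Hout. auto_derive.
    + nz.
    + field. split; lra.
  - intros y Hy. rewrite Rmin_left, Rmax_right in Hy by lra.
    assert (Hu := HU y 0 ltac:(unfold inDelta; lra)).
    assert (Hv := HU y (1 - y) ltac:(unfold inDelta; lra)).
    apply (@ex_derive_continuous R_AbsRing R_NormedModule). auto_derive. nz.
Qed.

Definition Sf a b c := c + (a + c) + (b + c).
Definition Tf a b c := c * (a + c) + (a + c) * (b + c) + (b + c) * c.
Definition Gf a b c := 48 * PI ^ 2 * (Sf a b c) ^ 2 / Tf a b c.

Lemma Tpos a b c : 0 < c -> 0 < a + c -> 0 < b + c -> 0 < Tf a b c.
Proof.
  intros. unfold Tf.
  assert (0 < c * (a + c)) by (apply Rmult_lt_0_compat; lra).
  assert (0 < (a + c) * (b + c)) by (apply Rmult_lt_0_compat; lra).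
  assert (0 < (b + c) * c) by (apply Rmult_lt_0_compat; lra).
  lra.
Qed.

Lemma E_val a b c : 0 < c -> 0 < a + c -> 0 < b + c -> E a b c = Gf a b c.
Proof.
  intros Hp Hq Hr. pose proof (Tpos a b c Hp Hq Hr).
  unfold E. rewrite bdry_val, delta_val by lra. unfold Gf, Sf, Tf in *.
  field. repeat split; lra.
Qed.

Lemma inU_pos a b c : inU a b c -> 0 < c /\ 0 < a + c /\ 0 < b + c.
Proof.
  intros HU.
  pose proof (HU 0 0 ltac:(unfold inDelta; lra)).
  pose proof (HU 1 0 ltac:(unfold inDelta; lra)).
  pose proof (HU 0 1 ltac:(unfold inDelta; lra)).
  repeat split; lra.
Qed.

Definition D1 a b c := 48 * PI ^ 2 * (2 * Sf a b c * Tf a b c - (Sf a b c)^2 * (c + (b + c))) / (Tf a b c)^2.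
Definition D2 a b c := 48 * PI ^ 2 * (2 * Sf a b c * Tf a b c - (Sf a b c)^2 * (c + (a + c))) / (Tf a b c)^2.
Definition D3 a b c := 48 * PI ^ 2 * (6 * Sf a b c * Tf a b c - (Sf a b c)^2 * (2 * Sf a b c)) / (Tf a b c)^2.

Lemma dE1 a b c : 0 < c -> 0 < a + c -> 0 < b + c ->
  derivable_pt_lim (fun x => E x b c) a (D1 a b c).
Proof.
  intros Hp Hq Hr. apply is_derive_Reals.
  apply (is_derive_ext_loc (fun x => Gf x b c)).
  { apply (locally_interval _ a (-c) p_infty); simpl; try lra; auto.
    intros y Hy _. symmetry. apply E_val; lra. }
  pose proof (Tpos a b c Hp Hq Hr).
  unfold Gf, D1, Sf, Tf in *. auto_derive. lra. field. lra.
Qed.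

Lemma dE2 a b c : 0 < c -> 0 < a + c -> 0 < b + c ->
  derivable_pt_lim (fun y => E a y c) b (D2 a b c).
Proof.
  intros Hp Hq Hr. apply is_derive_Reals.
  apply (is_derive_ext_loc (fun y => Gf a y c)).
  { apply (locally_interval _ b (-c) p_infty); simpl; try lra; auto.
    intros y Hy _. symmetry. apply E_val; lra. }
  pose proof (Tpos a b c Hp Hq Hr).
  unfold Gf, D2, Sf, Tf in *. auto_derive. lra. field. lra.
Qed.

Lemma dE3 a b c : 0 < c -> 0 < a + c -> 0 < b + c ->
  derivable_pt_lim (fun z => E a b z) c (D3 a b c).
Proof.
  intros Hp Hq Hr. apply is_derive_Reals.
  set (m := Rmin c (Rmin (a + c) (b + c))).
  assert (0 < m).
  { unfold m. apply Rmin_pos; [lra|]. apply Rmin_pos; lra. }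
  assert (m <= c) by apply Rmin_l.
  assert (m <= a + c) by (unfold m; eapply Rle_trans; [apply Rmin_r|apply Rmin_l]).
  assert (m <= b + c) by (unfold m; eapply Rle_trans; [apply Rmin_r|apply Rmin_r]).
  apply (is_derive_ext_loc (fun z => Gf a b z)).
  { apply (locally_interval _ c (c - m) p_infty); simpl; try lra; auto.
    intros y Hy _. symmetry. apply E_val; lra. }
  pose proof (Tpos a b c Hp Hq Hr).
  unfold Gf, D3, Sf, Tf in *. auto_derive. lra. field. lra.
Qed.

Lemma num_zero a b c : 0 < c -> 0 < a + c -> 0 < b + c -> forall N, 
  48 * PI ^ 2 * N / (Tf a b c)^2 = 0 -> N = 0.
Proof.
  intros Hp Hq Hr N H.
  pose proof (Tpos a b c Hp Hq Hr). pose proof PI_RGT_0.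
  replace N with (48 * PI ^ 2 * N / (Tf a b c)^2 * ((Tf a b c)^2 / (48 * PI^2))).
  - rewrite H. ring.
  - field. split; lra.
Qed.

Theorem mainTheorem3 :
  forall a b c : R, inU a b c ->
    (critical_E a b c <-> exists t : R, 0 < t /\ a = 0 /\ b = 0 /\ c = t).
Proof.
  intros a b c HU. destruct (inU_pos a b c HU) as [Hp [Hq Hr]].
  split.
  - intros [H1 [H2 _]].
    pose proof (uniqueness_limite _ _ _ _ H1 (dE1 a b c Hp Hq Hr)) as E1.
    pose proof (uniqueness_limite _ _ _ _ H2 (dE2 a b c Hp Hq Hr)) as E2.
    unfold D1, D2 in E1, E2. symmetry in E1, E2.
    apply num_zero in E1; try lra. apply num_zero in E2; try lra.
    assert (HS : 0 < Sf a b c) by (unfold Sf; lra).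
    assert (Hab : a = b).
    { assert ((Sf a b c)^2 * (b - a) = 0) .
      { assert (X : (Sf a b c)^2 * (b - a) =
          (2 * Sf a b c * Tf a b c - (Sf a b c)^2 * (c + (a + c))) -
          (2 * Sf a b c * Tf a b c - (Sf a b c)^2 * (c + (b + c)))) by ring.
        rewrite X, E1, E2. ring. }
      apply Rmult_integral in H. destruct H as [H|H]; [|lra].
      exfalso. apply pow_nonzero in H; lra. }
    subst b.
    assert (Hf : Sf a a c * c * a = 0).
    { rewrite <- E1. unfold Sf, Tf. ring. }
    apply Rmult_integral in Hf. destruct Hf as [Hf|Hf]; [|].
    + apply Rmult_integral in Hf. destruct Hf; lra.
    + exists c. repeat split; lra.
  - intros [t [Ht [Ha [Hb Hc]]]]. subst a b c.
    repeat split.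
    + assert (Z : D1 0 0 t = 0).
      { unfold D1. replace (2 * Sf 0 0 t * Tf 0 0 t - (Sf 0 0 t)^2 * (t + (0 + t))) with 0 by (unfold Sf, Tf; ring). unfold Rdiv; ring. }
      pose proof (dE1 0 0 t ltac:(lra) ltac:(lra) ltac:(lra)) as HD. rewrite Z in HD. exact HD.
    + assert (Z : D2 0 0 t = 0).
      { unfold D2. replace (2 * Sf 0 0 t * Tf 0 0 t - (Sf 0 0 t)^2 * (t + (0 + t))) with 0 by (unfold Sf, Tf; ring). unfold Rdiv; ring. }
      pose proof (dE2 0 0 t ltac:(lra) ltac:(lra) ltac:(lra)) as HD. rewrite Z in HD. exact HD.
    + assert (Z : D3 0 0 t = 0).
      { unfold D3. replace (6 * Sf 0 0 t * Tf 0 0 t - (Sf 0 0 t)^2 * (2 * Sf 0 0 t)) with 0 by (unfold Sf, Tf; ring). unfold Rdiv; ring. }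
      pose proof (dE3 0 0 t ltac:(lra) ltac:(lra) ltac:(lra)) as HD. rewrite Z in HD. exact HD.
Qed.
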